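(* Let $(S,K,I)$ be a split graph with $|I|\ge2$ and $K=\bigcup_{v\in I}N_S(v)$. If $\Phi(S)$ is simple and connected, then $S$ is homogeneous.
   Context: All graphs are finite and simple. A split graph is a graph $S$ whose vertex set is a disjoint union $V(S)=K\,\dot\cup\,I$ with $K$ a clique and $I$ an independent set; $(K,I)$ is called a bipartition of $S$, and $(S,K,I)$ denotes $S$ together with this fixed bipartition. For a split graph $(S,K,I)$ and distinct $u,v\in I$, $\sigma_{uv}(S)$ is the number of induced subgraphs of $S$ isomorphic to $P_4$ containing both $u$ and $v$. The factor graph $\Phi(S)$ is the loopless multigraph with vertex set $I$ having exactly $\sigma_{uv}(S)$ parallel edges between $u$ and $v$; it is simple if $\sigma_{uv}(S)\in\{0,1\}$ for all $u,v$. Graph notions (connected, complete, clique, etc.) applied to $\Phi(S)$ refer to its underlying simple graph, in which $u\sim v$ iff $\sigma_{uv}(S)\ge1$. A vertex $w$ of $(S,K,I)$ is swing if $N_S(w)=K\setminus\{w\}$. $(S,K,I)$ is balanced if $|K|=\omega(S)$ and $|I|=\alpha(S)$; it is known that $S$ is balanced iff it has no swing vertex. $(S,K,I)$ is homogeneous if it is balanced and all vertices of $I$ have the same degree in $S$. *)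

(* Defs.v *)
(* A finite simple graph is a symmetric irreflexive
   relation e on a finType T. *)
From mathcomp Require Import all_boot.
Set Implicit Arguments. Unset Strict Implicit. Unset Printing Implicit Defensive.

Section Graphs.
Variable T : finType.
Variable e : rel T.

Definition nbh (v : T) : {set T} := [set w | e v w].
Definition deg (v : T) : nat := #|nbh v|.

Definition is_clique (A : {set T}) : bool :=
  [forall x in A, forall y in A, (x != y) ==> e x y].
Definition is_indep (A : {set T}) : bool :=
  [forall x in A, forall y in A, ~~ e x y].

Definition omega : nat := \max_(A : {set T} | is_clique A) #|A|.
Definition alpha : nat := \max_(A : {set T} | is_indep A) #|A|.

Definition split_bipartition (K I : {set T}) : bool :=
  [&& K :&: I == set0, K :|: I == setT, is_clique K & is_indep I].

Definition induces_P4 (X : {set T}) : bool :=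
  [exists a, exists b, exists c, exists d,
     [&& X == [set a; b; c; d], #|X| == 4,
         e a b, e b c, e c d, ~~ e a c, ~~ e b d & ~~ e a d]].

Definition sigma (u v : T) : nat :=
  #|[set X : {set T} | [&& u \in X, v \in X & induces_P4 X]]|.

Definition factor_simple (I : {set T}) : Prop :=
  forall u v, u \in I -> v \in I -> u != v -> sigma u v <= 1.

(* adjacency of the underlying simple graph of Phi(S) *)
Definition factor_adj (I : {set T}) : rel T :=
  fun u v => [&& u \in I, v \in I, u != v & 0 < sigma u v].

Definition factor_connected (I : {set T}) : Prop :=
  forall u v, u \in I -> v \in I -> connect (factor_adj I) u v.

Definition balanced (K I : {set T}) : Prop :=
  #|K| = omega /\ #|I| = alpha.

Definition homogeneous (K I : {set T}) : Prop :=
  balanced K I /\ (forall u v, u \in I -> v \in I -> deg u = deg v).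

End Graphs.

(* Main.v *)
Require Import Defs.
From mathcomp Require Import all_boot.

Lemma card4 (T:finType) (u x y v : T) : u != x -> u != y -> u!= v -> x != y -> x != v -> y != v -> #|[set u; x; y; v]| = 4.
Proof.
move=> ux uy uv xy xv yv.
have -> : [set u; x; y; v] = v |: (y |: (x |: [set u])).
  by apply/setP=> z; rewrite !inE; case: (z == u); case: (z==x); case: (z==y); case: (z==v).
rewrite !cardsU1 cards1 !inE.
by rewrite (eq_sym v y) (eq_sym v x) (eq_sym v u) (eq_sym y x) (eq_sym y u) (eq_sym x u) (negPf ux) (negPf uy) (negPf uv) (negPf xy) (negPf xv) (negPf yv).
Qed.

Theorem theorem3p3 (T : finType) (e : rel T)
  (e_sym : symmetric e) (e_irr : irreflexive e) (K I : {set T}) :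
  split_bipartition e K I ->
  2 <= #|I| ->
  K = \bigcup_(v in I) nbh e v ->
  factor_simple e I ->
  factor_connected e I ->
  homogeneous e K I.
Proof.
move=> hsp hI2 hK hsimp hconn.
case/and4P: hsp => /eqP KI0 /eqP KIT cliqK indI.
have inKI x : (x \in K) || (x \in I).
  have : x \in [set: T] by rewrite inE.
  by rewrite -KIT inE.
have notKI x : x \in K -> x \in I -> False.
  move=> h1 h2; have : x \in K :&: I by rewrite inE h1 h2.
  by rewrite KI0 inE.
have indE x y : x \in I -> y \in I -> ~~ e x y.
  by move=> hx hy; move/forall_inP: indI => /(_ x hx) /forall_inP /(_ y hy).
have cliqE x y : x \in K -> y \in K -> x != y -> e x y.
  by move=> hx hy hxy; move/forall_inP: cliqK => /(_ x hx) /forall_inP /(_ y hy) /implyP; apply.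
have nbK x y : x \in I -> e x y -> y \in K.
  move=> hx hxy; case/orP: (inKI y) => // hy.
  by move: (indE x y hx hy); rewrite hxy.
have P4s u v (X : {set T}) : u \in I -> v \in I -> u != v -> u \in X -> v \in X -> induces_P4 e X ->
    exists x y, [/\ X = [set u; x; y; v], e u x, ~~ e v x, e v y & ~~ e u y].
  move=> hu hv uv huX hvX /existsP[a /existsP[b /existsP[c /existsP[d H]]]].
  move: H => /andP[/eqP hX /andP[_ /andP[eab /andP[ebc /andP[ecd /andP[nac /andP[nbd nad]]]]]]].
  have bI : b \notin I.
    apply/negP=> hb.
    have aK : a \in K by apply: (nbK b); rewrite // e_sym.
    have cK : c \in K by apply: (nbK b).
    have ac : a != c by apply/eqP=> ac; move: ecd; rewrite -ac (negPf nad).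
    by move: (cliqE a c aK cK ac); rewrite (negPf nac).
  have cI : c \notin I.
    apply/negP=> hc.
    have bK : b \in K by apply: (nbK c); rewrite // e_sym.
    have dK : d \in K by apply: (nbK c).
    have bd : b != d by apply/eqP=> bd; move: eab; rewrite bd (negPf nad).
    by move: (cliqE b d bK dK bd); rewrite (negPf nbd).
  have hpos w : w \in I -> w \in X -> (w == a) || (w == d).
    move=> hw; rewrite hX !inE => /orP[/orP[/orP[->|/eqP wb]|/eqP wc]|->] //.
    - by move: bI; rewrite -wb hw.
    - by move: cI; rewrite -wc hw.
    - by rewrite orbT.
  case/orP: (hpos u hu huX) => /eqP eu; case/orP: (hpos v hv hvX) => /eqP ev.
  - by move: uv; rewrite eu ev eqxx.
  - exists b, c; subst u v; split => //; by rewrite e_sym.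
  - exists c, b; subst u v; split => //; try by rewrite e_sym.
    apply/setP=> z; rewrite hX !inE.
    by case: (z == a); case: (z==b); case: (z==c); case: (z==d).
  - by move: uv; rewrite eu ev eqxx.
have mkP4 u v x y : u \in I -> v \in I -> u != v -> e u x -> ~~ e v x -> e v y -> ~~ e u y ->
    induces_P4 e [set u; x; y; v].
  move=> hu hv uv eux nvx evy nuy.
  have xK := nbK u x hu eux. have yK := nbK v y hv evy.
  have xy : x != y by apply/eqP=> xy; move: nvx; rewrite xy evy.
  apply/existsP; exists u; apply/existsP; exists x; apply/existsP; exists y; apply/existsP; exists v.
  have ux : u != x by apply/eqP=> ux; move: eux; rewrite ux e_irr.
  have uy : u != y by apply/eqP=> uy; apply: (notKI y) => //; rewrite -uy.
  have xv : x != v by apply/eqP=> xv; apply: (notKI x) => //; rewrite xv.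
  have yv : y != v by apply/eqP=> yv; apply: (notKI y) => //; rewrite yv.
  have exy : e x y by apply: cliqE.
  have c4 := @card4 T u x y v ux uy uv xy xv yv.
  have nuv := indE u v hu hv.
  rewrite eqxx c4 eqxx eux exy (e_sym y v) evy nuy (e_sym x v) nvx nuv.
  by [].
have sigC u v : sigma e u v = sigma e v u.
  by rewrite /sigma; apply: eq_card => X; rewrite !inE andbA (andbC (u \in X)) -andbA.
have cnt u v : u \in I -> v \in I -> u != v -> 0 < sigma e u v ->
    #|nbh e u :\: nbh e v| <= sigma e u v.
  move=> hu hv uv /card_gt0P[X]; rewrite inE => /and3P[huX hvX hP].
  have [x [y [_ _ _ evy nuy]]] := P4s u v X hu hv uv huX hvX hP.
  pose f x := [set u; x; y; v].
  have finj : {in nbh e u :\: nbh e v &, injective f}.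
    move=> x1 x2; rewrite !inE => /andP[nvx1 eux1] /andP[nvx2 eux2] hf.
    have : x1 \in f x2 by rewrite -hf /f !inE eqxx !orbT.
    rewrite /f !inE => /orP[/orP[/orP[/eqP ux|/eqP //]|/eqP xy]|/eqP xv].
    - by move: eux1; rewrite ux e_irr.
    - by move: nuy; rewrite -xy eux1.
    - by move: eux1; rewrite xv (negPf (indE u v hu hv)).
  rewrite -(card_in_imset finj) /sigma; apply: subset_leq_card.
  apply/subsetP=> _ /imsetP[x0 hx ->]; move: hx; rewrite !inE => /andP[nvx eux].
  rewrite !eqxx !orbT /=; exact: mkP4.
have adjdeg u v : factor_adj e I u v -> deg e u = deg e v.
  case/and4P=> hu hv uv hs.
  have s1 := hsimp u v hu hv uv.
  have c1 := leq_trans (cnt u v hu hv uv hs) s1.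
  have vu : v != u by rewrite eq_sym.
  have c2 : #|nbh e v :\: nbh e u| <= 1.
    by apply: leq_trans (cnt v u hv hu vu _) _; rewrite sigC.
  move: hs => /card_gt0P[X]; rewrite inE => /and3P[huX hvX hP].
  have [x [y [_ eux nvx evy nuy]]] := P4s u v X hu hv uv huX hvX hP.
  have d1 : 0 < #|nbh e u :\: nbh e v| by apply/card_gt0P; exists x; rewrite !inE eux nvx.
  have d2 : 0 < #|nbh e v :\: nbh e u| by apply/card_gt0P; exists y; rewrite !inE evy nuy.
  rewrite /deg -(cardsID (nbh e v) (nbh e u)) -(cardsID (nbh e u) (nbh e v)) setIC.
  have e1 : #|nbh e u :\: nbh e v| = 1 by apply/eqP; rewrite eqn_leq c1 d1.
  have e2 : #|nbh e v :\: nbh e u| = 1 by apply/eqP; rewrite eqn_leq c2 d2.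
  by rewrite e1 e2.
have degeq u v : u \in I -> v \in I -> deg e u = deg e v.
  move=> hu hv; move/connectP: (hconn u v hu hv) => [p pth ->].
  elim: p u {hu} pth => //= w p IH u /andP[adj pth].
  by rewrite (adjdeg u w adj) IH.
have noswing v : v \in I -> exists2 y, y \in K & ~~ e v y.
  move=> hv.
  have [u hu uv] : exists2 u, u \in I & v != u.
    have : 1 < #|I| by [].
    rewrite (cardsD1 v) hv ltnS => /card_gt0P[u]; rewrite !inE => /andP[uv hu].
    by exists u; rewrite // eq_sym.
  move/connectP: (hconn v u hv hu) => [[|w p] pth eq]; first by move: uv; rewrite eq eqxx.
  move: pth => /= /andP[/and4P[_ hw vw hs] _].
  move: hs => /card_gt0P[X]; rewrite inE => /and3P[hvX hwX hP].
  have [x [y [_ _ _ ewy nvy]]] := P4s v w X hv hw vw hvX hwX hP.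
  by exists y => //; apply: (nbK w).
split; last by [].
split.
- apply/eqP; rewrite eqn_leq; apply/andP; split; first by rewrite /omega; apply: leq_bigmax_cond.
  apply/bigmax_leqP => A cA.
  have cAE x y : x \in A -> y \in A -> x != y -> e x y.
    by move=> hx hy hxy; move/forall_inP: cA => /(_ x hx) /forall_inP /(_ y hy) /implyP; apply.
  case: (boolP [exists v in A, v \in I]) => [/exists_inP[v vA vI]|].
  + have [y yK nvy] := noswing v vI.
    rewrite (cardsD1 v) vA add1n; apply: proper_card; apply/properP; split.
    * apply/subsetP=> w; rewrite !inE => /andP[wv wA].
      by apply: (nbK v) => //; apply: cAE; rewrite // eq_sym.
    * exists y => //; rewrite !inE; apply/negP=> /andP[yv yA].
      by move: nvy; rewrite cAE // eq_sym.
  + move/exists_inPn=> nI; apply: subset_leq_card; apply/subsetP=> w wA.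
    by case/orP: (inKI w) => // wI; move: (nI w wA); rewrite wI.
- apply/eqP; rewrite eqn_leq; apply/andP; split; first by rewrite /alpha; apply: leq_bigmax_cond.
  apply/bigmax_leqP => A iA.
  have iAE x y : x \in A -> y \in A -> ~~ e x y.
    by move=> hx hy; move/forall_inP: iA => /(_ x hx) /forall_inP /(_ y hy).
  case: (boolP [exists k in A, k \in K]) => [/exists_inP[k kA kK]|].
  + have : k \in \bigcup_(v in I) nbh e v by rewrite -hK.
    case/bigcupP=> v vI; rewrite inE => evk.
    rewrite (cardsD1 k) kA add1n; apply: proper_card; apply/properP; split.
    * apply/subsetP=> w; rewrite !inE => /andP[wk wA].
      case/orP: (inKI w) => // wK.
      by move: (iAE k w kA wA); rewrite cliqE // eq_sym.
    * exists v => //; rewrite !inE; apply/negP=> /andP[_ vA].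
      by move: (iAE v k vA kA); rewrite evk.
  + move/exists_inPn=> nK; apply: subset_leq_card; apply/subsetP=> w wA.
    by case/orP: (inKI w) => // wK; move: (nK w wA); rewrite wK.
Qed.
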